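(* Let $A$ be an algebra over a field of characteristic zero satisfying $(x^2,x^2,x^2)=0$ for all $x\in A$, and assume $A$ has a left unit $e$ which is not a divisor of zero. Then $(xe)e=x$ for all $x\in A$.
   Context: $(x,y,z)=(xy)z-x(yz)$. A left unit $e$ satisfies $ex=x$ for all $x$. *)

(* Defs.v *)
From mathcomp Require Import all_boot all_algebra.
Set Implicit Arguments. Unset Strict Implicit. Unset Printing Implicit Defensive.
Import GRing.Theory.
Local Open Scope ring_scope.

(* A (not necessarily associative) algebra over a field F: an F-vector space V
   with an F-bilinear product [mul]. *)
Definition bilinear_mul (F : fieldType) (V : lmodType F) (mul : V -> V -> V) :=
  (forall (a : F) (x y z : V), mul (a *: x + y) z = a *: mul x z + mul y z) /\
  (forall (a : F) (x y z : V), mul x (a *: y + z) = a *: mul x y + mul x z).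

Definition assoc (F : fieldType) (V : lmodType F) (mul : V -> V -> V) (x y z : V) : V :=
  mul (mul x y) z - mul x (mul y z).

Definition left_unit (F : fieldType) (V : lmodType F) (mul : V -> V -> V) (e : V) :=
  forall x, mul e x = x.

Definition zero_divisor (F : fieldType) (V : lmodType F) (mul : V -> V -> V) (e : V) :=
  exists x : V, x != 0 /\ (mul e x = 0 \/ mul x e = 0).

(* Main.v *)
Require Import Defs.
From mathcomp Require Import all_boot all_algebra.
Import GRing.Theory.
Local Open Scope ring_scope.

Fixpoint ph {F : fieldType} {V : lmodType F} (n : nat) (f : F -> V) : Prop :=
  match n with
  | O => forall t, f t = 0
  | S m => exists c : V, exists h : F -> V, ph m h /\ forall t, f t = t ^+ m *: c + h t
  end.

Lemma ph_ext {F : fieldType} {V : lmodType F} n (f g : F -> V) :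
  (forall t, f t = g t) -> ph n f -> ph n g.
Proof.
case: n => [|n] E /=; first by move=> H t; rewrite -E.
by case=> c [h [Hh Hf]]; exists c, h; split => // t; rewrite -E.
Qed.

Lemma ph_S {F : fieldType} {V : lmodType F} n (f : F -> V) : ph n f -> ph n.+1 f.
Proof. move=> H; exists 0, f; split => // t; by rewrite scaler0 add0r. Qed.

Lemma ph_le {F : fieldType} {V : lmodType F} n m (f : F -> V) :
  (n <= m)%N -> ph n f -> ph m f.
Proof.
move=> le; rewrite -(subnKC le); elim: (m - n)%N => [|k IH] H; first by rewrite addn0.
by rewrite addnS; apply: ph_S; apply: IH.
Qed.

Lemma ph_lin {F : fieldType} {V : lmodType F} n (L : V -> V) (f : F -> V) :
  (forall u v, L (u + v) = L u + L v) -> (forall (a : F) u, L (a *: u) = a *: L u) ->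
  ph n f -> ph n (fun t => L (f t)).
Proof.
move=> LD LZ; have L0 : L 0 = 0 by have := LZ 0 0; rewrite !scale0r.
elim: n f => [|n IH] f /=; first by move=> H t; rewrite H L0.
case=> c [h [Hh Hf]]; exists (L c), (fun t => L (h t)); split; first exact: IH.
by move=> t; rewrite Hf LD LZ.
Qed.

Lemma ph_add {F : fieldType} {V : lmodType F} n (f g : F -> V) :
  ph n f -> ph n g -> ph n (fun t => f t + g t).
Proof.
elim: n f g => [|n IH] f g /=; first by move=> Hf Hg t; rewrite Hf Hg addr0.
case=> c [h [Hh Hf]] [d [k [Hk Hg]]]; exists (c + d), (fun t => h t + k t); split.
  exact: IH.
by move=> t; rewrite Hf Hg scalerDr addrACA.
Qed.

Lemma ph_arg {F : fieldType} {V : lmodType F} n (s : F) (f : F -> V) :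
  ph n f -> ph n (fun t => f (s * t)).
Proof.
elim: n f => [|n IH] f /=; first by move=> H t; rewrite H.
case=> c [h [Hh Hf]]; exists (s ^+ n *: c), (fun t => h (s * t)); split; first exact: IH.
by move=> t; rewrite Hf exprMn scalerA [t ^+ n * _]mulrC.
Qed.

Lemma ph_tmul {F : fieldType} {V : lmodType F} n (f : F -> V) :
  ph n f -> ph n.+1 (fun t => t *: f t).
Proof.
elim: n f => [|n IH] f /=.
  by move=> H; exists 0, (fun _ => 0); split => // t; rewrite H !scaler0 addr0.
case=> c [h [Hh Hf]]; exists c, (fun t => t *: h t); split; first exact: IH.
by move=> t; rewrite Hf scalerDr scalerA exprS.
Qed.

Definition Pf {F : fieldType} {V : lmodType F} (f : F -> V) := exists n, ph n f.

Lemma Pf_ext {F : fieldType} {V : lmodType F} (f g : F -> V) :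
  (forall t, f t = g t) -> Pf f -> Pf g.
Proof. by move=> E [n H]; exists n; apply: ph_ext H. Qed.

Lemma Pf_add {F : fieldType} {V : lmodType F} (f g : F -> V) :
  Pf f -> Pf g -> Pf (fun t => f t + g t).
Proof.
move=> [n Hf] [m Hg]; exists (maxn n m); apply: ph_add.
  exact: ph_le (leq_maxl n m) Hf.
exact: ph_le (leq_maxr n m) Hg.
Qed.

Lemma Pf_lin {F : fieldType} {V : lmodType F} (L : V -> V) (f : F -> V) :
  (forall u v, L (u + v) = L u + L v) -> (forall (a : F) u, L (a *: u) = a *: L u) ->
  Pf f -> Pf (fun t => L (f t)).
Proof. by move=> LD LZ [n H]; exists n; apply: ph_lin. Qed.

Lemma Pf_tmul {F : fieldType} {V : lmodType F} (f : F -> V) :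
  Pf f -> Pf (fun t => t *: f t).
Proof. by move=> [n H]; exists n.+1; apply: ph_tmul. Qed.

Lemma Pf_const {F : fieldType} {V : lmodType F} (v : V) : Pf (fun _ : F => v).
Proof. by exists 1%N, v, (fun _ => 0); split => // t; rewrite expr0 scale1r addr0. Qed.

Lemma Pf_tpow {F : fieldType} {V : lmodType F} k (f : F -> V) :
  Pf f -> Pf (fun t => t ^+ k *: f t).
Proof.
elim: k => [|k IH] H.
  by apply: (Pf_ext _ _ _ H) => t; rewrite expr0 scale1r.
  have := Pf_tmul _ (IH H); apply: Pf_ext => t. by rewrite exprS scalerA.
Qed.

Section Mul.
Lemma mul_lemmas {F : fieldType} {V : lmodType F} (mul : V -> V -> V) :
  bilinear_mul mul ->
  [/\ (forall x y z, mul (x + y) z = mul x z + mul y z),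
      (forall a x z, mul (a *: x) z = a *: mul x z),
      (forall x y z, mul z (x + y) = mul z x + mul z y),
      (forall a x z, mul z (a *: x) = a *: mul z x) &
      (forall z, mul 0 z = 0 /\ mul z 0 = 0)].
Proof.
move=> [H1 H2].
have Z1 z : mul 0 z = 0.
  have := H1 1 0 0 z; rewrite scaler0 addr0 scale1r => E.
  by apply/(addrI (mul 0 z)); rewrite addr0 -E.
have Z2 z : mul z 0 = 0.
  have := H2 1 z 0 0; rewrite scaler0 addr0 scale1r => E.
  by apply/(addrI (mul z 0)); rewrite addr0 -E.
split.
- by move=> x y z; have := H1 1 x y z; rewrite !scale1r => E; exact: E.
- by move=> a x z; have := H1 a x 0 z; rewrite addr0 Z1 addr0 => E; exact: E.
- by move=> x y z; have := H2 1 z x y; rewrite !scale1r => E; exact: E.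
- by move=> a x z; have := H2 a z x 0; rewrite addr0 Z2 addr0 => E; exact: E.
- by [].
Qed.
End Mul.

Lemma Pf_mul {F : fieldType} {V : lmodType F} (mul : V -> V -> V) (f g : F -> V) :
  bilinear_mul mul -> Pf f -> Pf g -> Pf (fun t => mul (f t) (g t)).
Proof.
move=> Hb [n Hf] Hg; have [mDl mZl mDr mZr m0] := mul_lemmas _ Hb.
elim: n f Hf => [|n IH] f /=.
  by move=> H; exists 0%N => t /=; rewrite H (m0 _).1.
case=> c [h [Hh Hf]].
apply: (@Pf_ext _ _ (fun t => t ^+ n *: mul c (g t) + mul (h t) (g t))).
  by move=> t; rewrite Hf mDl mZl.
apply: Pf_add; last exact: IH.
apply: Pf_tpow; apply: Pf_lin Hg => [u v|a u]; [exact: mDr | exact: mZr].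
Qed.

Lemma Pf_opp {F : fieldType} {V : lmodType F} (f : F -> V) : Pf f -> Pf (fun t => - f t).
Proof. by apply: Pf_lin => [u v|a u]; rewrite ?opprD ?scalerN. Qed.

Lemma Pf_assoc {F : fieldType} {V : lmodType F} (mul : V -> V -> V) (u v w : F -> V) :
  bilinear_mul mul -> Pf u -> Pf v -> Pf w -> Pf (fun t => assoc mul (u t) (v t) (w t)).
Proof.
move=> Hb Hu Hv Hw; rewrite /assoc; apply: Pf_add.
  by apply: Pf_mul => //; apply: Pf_mul.
by apply: Pf_opp; apply: Pf_mul => //; apply: Pf_mul.
Qed.
Lemma ph_van {F : fieldType} {V : lmodType F} n (f : F -> V) :
  (2%:R != 0 :> F) -> (forall k, (1 - 2%:R ^+ k.+1 : F) != 0) ->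
  ph n f -> (forall t, t != 0 -> f t = 0) -> f 0 = 0.
Proof.
move=> h2 hk; elim: n f => [|n IH] f /=; first by move=> H _; exact: H.
case=> c [h [Hh Hf]] Hz.
have Hg : ph n (fun t => h (2%:R * t) + (- 2%:R ^+ n) *: h t).
  apply: ph_add; first exact: ph_arg.
  apply: (ph_lin n (fun u => (- 2%:R ^+ n) *: u) h) => [u v|a u|].
  - by rewrite scalerDr.
  - by rewrite !scalerA mulrC.
  - exact: Hh.
have Hg0 : forall t, t != 0 -> h (2%:R * t) + (- 2%:R ^+ n) *: h t = 0.
  move=> t tn0; have E1 := Hz _ (mulf_neq0 h2 tn0); have E2 := Hz _ tn0.
  rewrite Hf in E1; rewrite Hf in E2.
  have -> : h (2%:R * t) = - ((2%:R * t) ^+ n *: c).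
    by apply/eqP; rewrite -addr_eq0 addrC E1.
  have -> : h t = - (t ^+ n *: c).
    by apply/eqP; rewrite -addr_eq0 addrC E2.
  by rewrite exprMn scalerN scaleNr opprK scalerA addNr.
have := IH _ Hg Hg0; rewrite mulr0 => E.
rewrite Hf.
case: n IH Hh Hf Hg Hg0 E => [|n] _ Hh Hf _ _ E.
  have := Hz 1 (oner_neq0 _); rewrite Hf !Hh expr0 !scale1r !addr0 => ->.
  by rewrite ?scaler0 ?addr0.
rewrite expr0n /= scale0r add0r.
have : (1 - 2%:R ^+ n.+1) *: h 0 = 0 by rewrite scalerBl scale1r -scaleNr.
by move/eqP; rewrite scaler_eq0 (negbTE (hk n)) /= => /eqP.
Qed.

Theorem lemma1 (F : fieldType) (V : lmodType F) (mul : V -> V -> V) (e : V) :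
  [pchar F] =i pred0 ->
  bilinear_mul mul ->
  (forall x : V, assoc mul (mul x x) (mul x x) (mul x x) = 0) ->
  left_unit mul e ->
  ~ zero_divisor mul e ->
  forall x : V, mul (mul x e) e = x.
Proof.
move=> ch Hb H3 Hl Hnz x.
have [mDl mZl mDr mZr m0] := mul_lemmas _ Hb.
have nz k : (k%:R == 0 :> F) = (k == 0)%N := (pcharf0P F).1 ch k.
have h2 : (2%:R != 0 :> F) by rewrite nz.
have hk k : (1 - 2%:R ^+ k.+1 : F) != 0.
  rewrite -natrX.
  have -> : (1 - (2 ^ k.+1)%:R : F) = - ((2 ^ k.+1 - 1)%:R) by rewrite natrB ?expn_gt0 // opprB.
  rewrite oppr_eq0 nz subn_eq0 expnS.
  by have := expn_gt0 2 k; case: (2 ^ k)%N => // m _; rewrite mulnS.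
have ee : mul e e = e := Hl e.
have Pe u v : assoc mul e u v = 0 by rewrite /assoc !Hl subrr.
have sub_lem (A B C D : V) (t : F) : (A + t *: B) - (C + t *: D) = (A - C) + t *: (B - D).
  by rewrite scalerBr opprD addrACA.
have lin1 u1 u2 v w (t : F) : assoc mul (u1 + t *: u2) v w = assoc mul u1 v w + t *: assoc mul u2 v w.
  by rewrite /assoc !(mDl, mZl, mDr, mZr) sub_lem.
have lin2 u v1 v2 w (t : F) : assoc mul u (v1 + t *: v2) w = assoc mul u v1 w + t *: assoc mul u v2 w.
  by rewrite /assoc !(mDl, mZl, mDr, mZr) sub_lem.
have lin3 u v w1 w2 (t : F) : assoc mul u v (w1 + t *: w2) = assoc mul u v w1 + t *: assoc mul u v w2.
  by rewrite /assoc !(mDl, mZl, mDr, mZr) sub_lem.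
have fact (R : V) (t : F) : assoc mul (e + t *: R) (e + t *: R) (e + t *: R) =
    t *: (assoc mul R e e + t *: (assoc mul R e R + assoc mul R R (e + t *: R))).
  rewrite lin1 Pe add0r lin2 lin3; congr (_ *: _).
  by rewrite -addrA -scalerDr.
have sq (t : F) : mul (e + t *: x) (e + t *: x) = e + t *: ((x + mul x e) + t *: mul x x).
  by rewrite !(mDl, mDr, mZl, mZr) ee Hl !scalerDr !scalerA !addrA.
pose a := x + mul x e; pose b := mul x x.
pose g := fun t : F => assoc mul a e e + t *: (assoc mul b e e +
   (assoc mul (a + t *: b) e (a + t *: b) + assoc mul (a + t *: b) (a + t *: b) (e + t *: (a + t *: b)))).
have Hg0 t : t != 0 -> g t = 0.
  move=> tn0; have := H3 (e + t *: x); rewrite sq fact lin1 => /eqP.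
  rewrite scaler_eq0 (negbTE tn0) /= => /eqP E.
  by rewrite /g scalerDr addrA; exact: E.
have PR : Pf (fun t : F => a + t *: b).
  by apply: Pf_add; [apply: Pf_const | apply: Pf_tmul; apply: Pf_const].
have PX : Pf (fun t : F => e + t *: (a + t *: b)).
  by apply: Pf_add; [apply: Pf_const | apply: Pf_tmul].
have Pg : Pf g.
  apply: Pf_add; first exact: Pf_const.
  apply: Pf_tmul; apply: Pf_add; first exact: Pf_const.
  by apply: Pf_add; apply: Pf_assoc => //; apply: Pf_const.
have [n Hn] := Pg.
have := ph_van n g h2 hk Hn Hg0; rewrite /g scale0r addr0 /assoc ee => /eqP.
rewrite subr_eq0 /a !mDl => /eqP Ha.
have Hw : mul (mul (mul x e) e) e = mul x e.
  by apply: (addrI (mul (mul x e) e)); rewrite Ha addrC.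
apply/eqP; rewrite -subr_eq0; apply/negPn/negP => nz0; apply: Hnz.
exists (mul (mul x e) e - x); split => //; right.
by rewrite mDl -scaleN1r mZl scaleN1r Hw subrr.
Qed.
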